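(* For every instance with $n=2$ agents (arbitrary budgets, costs and additive valuations), there exists a budget-feasible allocation that is EFx (with respect to budgets) and $\sqrt{1/2}$-efficient.
   Context: Setting: goods $M$ with costs $c(g)\ge0$, agents $i$ with budgets $B_i\ge 0$ and additive nonnegative valuations $v_i$, $c(S)=\sum_{g\in S}c(g)$. An allocation $\mathbf X=(X_1,\dots,X_n)$ is a tuple of pairwise disjoint subsets of $M$ (not all goods need be allocated); it is budget-feasible if $c(X_i)\le B_i$ for all $i$. $\mathbf X$ is EFx (with respect to budgets) if for all agents $i\ne j$, every $S\subseteq X_j$ with $c(S)\le B_i$ and every $g\in S$, $v_i(X_i)\ge v_i(S\setminus\{g\})$. $\mathrm{NSW}(\mathbf X)=(\prod_i v_i(X_i))^{1/n}$, and a budget-feasible $\mathbf X$ is $\rho$-efficient if $\mathrm{NSW}(\mathbf X)\ge\rho\cdot\max\{\mathrm{NSW}(\mathbf Y):\mathbf Y\text{ budget-feasible}\}$. *)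

(* Defs.v *)
From mathcomp Require Import all_boot all_order all_algebra.
Set Implicit Arguments. Unset Strict Implicit. Unset Printing Implicit Defensive.
Import Order.TTheory GRing.Theory Num.Theory.
Local Open Scope ring_scope.

Section Budget.
Variables (R : rcfType) (M : finType) (n : nat).

Definition setval (f : M -> R) (S : {set M}) : R := \sum_(g in S) f g.

Definition is_allocation (X : 'I_n -> {set M}) : Prop :=
  forall i j : 'I_n, i != j -> [disjoint X i & X j].

Definition budget_feasible (c : M -> R) (B : 'I_n -> R) (X : 'I_n -> {set M}) :=
  is_allocation X /\ forall i, setval c (X i) <= B i.

Definition EFx (c : M -> R) (B : 'I_n -> R) (v : 'I_n -> M -> R)
    (X : 'I_n -> {set M}) : Prop :=
  forall i j : 'I_n, i != j ->
  forall S : {set M}, S \subset X j -> setval c S <= B i ->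
  forall g, g \in S -> setval (v i) (S :\ g) <= setval (v i) (X i).

(* product of utilities; NSW = (this)^(1/n) *)
Definition NSWprod (v : 'I_n -> M -> R) (X : 'I_n -> {set M}) : R :=
  \prod_(i < n) setval (v i) (X i).
End Budget.

Definition NSW2 (R : rcfType) (M : finType) (v : 'I_2 -> M -> R)
    (X : 'I_2 -> {set M}) : R := Num.sqrt (NSWprod v X).

(* rho-efficiency: NSW(X) >= rho * NSW(Y) for every budget-feasible Y
   (equivalently >= rho * max, the max being over a finite nonempty set). *)
Definition rho_efficient2 (R : rcfType) (M : finType) (c : M -> R)
    (B : 'I_2 -> R) (v : 'I_2 -> M -> R) (rho : R) (X : 'I_2 -> {set M}) :=
  budget_feasible c B X /\
  forall Y, budget_feasible c B Y -> rho * NSW2 v Y <= NSW2 v X.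

(* Main.v *)
Require Import Defs.
From mathcomp Require Import all_boot all_order all_algebra.
From mathcomp Require Import lra.
Import Order.TTheory GRing.Theory Num.Theory.
Local Open Scope ring_scope.

Section Proof.
Variables (R : rcfType) (M : finType) (c : M -> R) (B : 'I_2 -> R)
    (v : 'I_2 -> M -> R).
Hypotheses (hc : forall g, 0 <= c g) (hB : forall i, 0 <= B i)
  (hv : forall i g, 0 <= v i g).

Lemma setval_ge0 (f : M -> R) (S : {set M}) : (forall x, 0 <= f x) -> 0 <= setval f S.
Proof. by move=> hf; apply: sumr_ge0. Qed.

Lemma setval_split (f : M -> R) (S P : {set M}) :
  setval f S = setval f (S :&: P) + setval f (S :\: P).
Proof. by rewrite /setval (big_setID P). Qed.

Lemma setval_sub (f : M -> R) (S T : {set M}) : (forall x, 0 <= f x) ->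
  S \subset T -> setval f S <= setval f T.
Proof.
move=> hf sST; rewrite (setval_split f T S) (setIidPr sST).
by rewrite lerDl setval_ge0.
Qed.

Notation V k S := (setval (v k) S).
Notation C S := (setval c S).

Definition best k (T : {set M}) : {set M} :=
  [arg max_(S > set0 | (S \subset T) && (C S <= B k)) V k S]%O.

Lemma bestP k (T : {set M}) : best k T \subset T /\ C (best k T) <= B k /\
  forall S : {set M}, S \subset T -> C S <= B k -> V k S <= V k (best k T).
Proof.
rewrite /best; case: arg_maxP.
  by rewrite sub0set /setval big_set0 hB.
move=> A /andP[h1 h2] h3; split=> //; split=> // S h4 h5.
by apply: h3; rewrite h4 h5.
Qed.

Definition fval k (T : {set M}) := V k (best k T).

Lemma fval_ge k (S T : {set M}) : S \subset T -> C S <= B k -> V k S <= fval k T.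
Proof. by move=> h1 h2; have [_ [_ h]] := bestP k T; apply: h. Qed.

Lemma fval_mono k (T T' : {set M}) : T \subset T' -> fval k T <= fval k T'.
Proof.
move=> h; have [h1 [h2 _]] := bestP k T.
by apply: fval_ge => //; apply: subset_trans h.
Qed.

Lemma fval_split j (Y P : {set M}) : C Y <= B j -> V j Y <= fval j P + fval j (~: P).
Proof.
move=> hY; rewrite (setval_split _ Y P); apply: lerD; apply: fval_ge.
- exact: subsetIr.
- by apply: le_trans hY; apply: setval_sub => //; apply: subsetIl.
- by rewrite setDE; apply: subsetIr.
- by apply: le_trans hY; apply: setval_sub => //; apply: subsetDl.
Qed.

Section Cut.
Variable i : 'I_2.

Definition mu (P : {set M}) := Num.min (fval i P) (fval i (~: P)).
Definition kk (P : {set M}) : nat :=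
  if fval i P < fval i (~: P) then #|P|
  else if fval i (~: P) < fval i P then #|~: P| else 0%N.

Lemma mu_C (P : {set M}) : mu (~: P) = mu P.
Proof. by rewrite /mu setCK minC. Qed.

Lemma kk_C (P : {set M}) : kk (~: P) = kk P.
Proof.
rewrite /kk setCK.
case: (ltgtP (fval i P) (fval i (~: P))) => //.
Qed.

Definition maxi (P : {set M}) := (forall P' : {set M}, mu P' <= mu P) /\
  (forall P' : {set M}, mu P' = mu P -> (kk P' <= kk P)%N).

Lemma maxi_C (P : {set M}) : maxi P -> maxi (~: P).
Proof.
move=> [h1 h2]; split=> P'; rewrite mu_C ?kk_C //; exact: h2.
Qed.

Lemma maxi_ex : exists P, maxi P.
Proof.
pose P0 := [arg max_(P > set0) mu P]%O.
pose P1 := [arg max_(P > P0 | mu P == mu P0) kk P]%O.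
exists P1.
have hP0 : forall P', mu P' <= mu P0.
  by rewrite /P0; case: arg_maxP => // A _ h P'; apply: h.
rewrite /P1; case: arg_maxP => // A /eqP hA h; split.
  by move=> P'; rewrite hA.
by move=> P' hP'; apply: h; rewrite hP' hA.
Qed.

Lemma cut (P : {set M}) : maxi P -> forall S : {set M}, S \subset ~: P -> C S <= B i ->
  forall g, g \in S -> V i (S :\ g) <= fval i P.
Proof.
move=> [hm hk] S hS hcS g hg.
case: (leP (V i (S :\ g)) (fval i P)) => // hlt; exfalso.
have hcS' : C (S :\ g) <= B i.
  by apply: le_trans hcS; apply: setval_sub => //; apply: subsetDl.
have hgP : g \notin P.
  by move/subsetP: hS => /(_ g hg); rewrite inE.
set P' := g |: P.
have h1 : fval i P <= fval i P' by apply: fval_mono; apply: subsetUr.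
have h2 : V i (S :\ g) <= fval i (~: P').
  apply: fval_ge => //; apply/subsetP => x; rewrite !inE.
  move=> /andP[hxg hxS]; rewrite negb_or hxg /=.
  by move/subsetP: hS => /(_ x hxS); rewrite inE.
have h3 : V i (S :\ g) <= fval i (~: P).
  by apply: fval_ge => //; apply: subset_trans hS; apply: subsetDl.
have hmuP : mu P = fval i P by rewrite /mu min_l //; apply: ltW; apply: lt_le_trans h3.
have hle : mu P' <= mu P := hm P'.
have hge : mu P <= mu P'.
  by rewrite hmuP /mu le_min h1 /=; apply: ltW; apply: lt_le_trans h2.
have heq : mu P' = mu P by apply/eqP; rewrite eq_le hle hge.
have hk' := hk P' heq.
have hf' : fval i P' = fval i P.
  move: hle; rewrite hmuP /mu ge_min => /orP[h|h].
    by apply/eqP; rewrite eq_le h h1.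
  by have := lt_le_trans hlt h2; rewrite ltNge h.
move: hk'; rewrite /kk hf'.
have -> : fval i P < fval i (~: P') by apply: lt_le_trans h2.
have -> : fval i P < fval i (~: P) by apply: lt_le_trans h3.
by rewrite /P' cardsU1 hgP add1n ltnn.
Qed.
End Cut.

Lemma I2_cases (k : 'I_2) : k = ord0 \/ k = ord_max.
Proof.
case: k => [[|[|k]] Hk]; [left|right|by []]; exact/val_inj.
Qed.

Lemma pair_cases (i j k l : 'I_2) : i != j -> k != l ->
  (k = i /\ l = j) \/ (k = j /\ l = i).
Proof.
move=> hij hkl.
case: (I2_cases i) hij => ->; case: (I2_cases j) => -> // _;
case: (I2_cases k) hkl => ->; case: (I2_cases l) => -> //; by auto.
Qed.

Lemma other_case (i j k : 'I_2) : i != j -> k = i \/ k = j.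
Proof.
move=> hij; case: (I2_cases i) hij => ->; case: (I2_cases j) => -> // _;
case: (I2_cases k) => ->; by auto.
Qed.

Lemma prod2 (i j : 'I_2) (F : 'I_2 -> R) : i != j ->
  \prod_(k < 2) F k = F i * F j.
Proof.
move=> hij; rewrite big_ord_recr big_ord1 /=.
have e0 : (ord0 : 'I_2) = widen_ord (leqnSn 1) ord0 by exact/val_inj.
have e1 : (ord_max : 'I_2) = ord_max by [].
case: (I2_cases i) hij => ->; case: (I2_cases j) => -> // _.
  by rewrite -e0.
by rewrite -e0 mulrC.
Qed.

Lemma NSW_ge0 (X : 'I_2 -> {set M}) : 0 <= NSWprod v X.
Proof. by apply: prodr_ge0 => k _; apply: setval_ge0. Qed.

Lemma cut_alloc (i j : 'I_2) (Y : 'I_2 -> {set M}) : i != j ->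
  budget_feasible c B Y -> V i (Y i) < fval i (Y j) ->
  exists X, budget_feasible c B X /\ EFx c B v X /\
    NSWprod v Y <= 2%:R * NSWprod v X.
Proof.
move=> hij [hdis hcost] henvy.
have [O [hO hOj]] : exists O, maxi i O /\ fval j O <= fval j (~: O).
  have [P hP] := maxi_ex i.
  case: (leP (fval j (~: P)) (fval j P)) => h.
    by exists (~: P); rewrite setCK; split => //; apply: maxi_C.
  by exists P; split => //; apply: ltW.
pose A := best i O; pose Bj := best j (~: O).
have [hA1 [hA2 hA3]] := bestP i O.
have [hB1 [hB2 hB3]] := bestP j (~: O).
pose X := fun k => if k == i then A else Bj.
have hji : j != i by rewrite eq_sym.
have Xi : X i = A by rewrite /X eqxx.
have Xj : X j = Bj by rewrite /X (negbTE hji).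
have hdisAB : [disjoint A & Bj].
  apply: (disjointW hA1 hB1); rewrite -setI_eq0; apply/eqP.
  by rewrite setICr.
exists X; split; [split|split].
- move=> k l hkl; case: (pair_cases _ _ _ _ hij hkl) => [[-> ->]|[-> ->]];
  rewrite Xi Xj //; by rewrite disjoint_sym.
- by move=> k; case: (other_case _ _ k hij) => ->; rewrite ?Xi ?Xj.
- move=> k l hkl; case: (pair_cases _ _ _ _ hij hkl) => [[-> ->]|[-> ->]];
  rewrite Xi Xj => S hS hcS g hg.
    apply: (cut _ _ hO) => //; exact: subset_trans hB1.
  apply: le_trans (_ : V j S <= _).
    by apply: setval_sub => //; apply: subsetDl.
  apply: le_trans hOj; apply: fval_ge => //; exact: subset_trans hA1.
- have hYj : Y j \subset ~: Y i.
    by rewrite subsets_disjoint setCK disjoint_sym; apply: hdis.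
  have hmu : V i (Y i) <= mu i (Y i).
    rewrite /mu le_min; apply/andP; split; first by apply: fval_ge.
    by apply: ltW; apply: (lt_le_trans henvy); apply: fval_mono.
  have hiA : V i (Y i) <= V i A.
    apply: le_trans hmu _; apply: le_trans (proj1 hO (Y i)) _.
    by rewrite /mu ge_min lexx.
  have hjB : V j (Y j) <= 2%:R * V j Bj.
    apply: le_trans (fval_split j (Y j) O (hcost j)) _.
    rewrite /fval -/Bj; move: hOj; rewrite /fval -/Bj; lra.
  rewrite /NSWprod (prod2 _ _ _ hij) (prod2 _ _ _ hij) Xi Xj.
  have := setval_ge0 _ (Y i) (hv i); have := setval_ge0 _ (Y j) (hv j).
  have := setval_ge0 _ A (hv i); have := setval_ge0 _ Bj (hv j).
  nra.
Qed.

Lemma noenvy_EFx (Y : 'I_2 -> {set M}) :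
  (forall k l, k != l -> fval k (Y l) <= V k (Y k)) -> EFx c B v Y.
Proof.
move=> h k l hkl S hS hcS g hg; apply: le_trans (h k l hkl).
apply: fval_ge; first by apply: subset_trans hS; apply: subsetDl.
by apply: le_trans hcS; apply: setval_sub => //; apply: subsetDl.
Qed.

Definition feasb (F : {ffun 'I_2 -> {set M}}) :=
  [forall k, forall l, (k != l) ==> [disjoint F k & F l]] &&
  [forall k, C (F k) <= B k].

Lemma feasbP (F : {ffun 'I_2 -> {set M}}) :
  reflect (budget_feasible c B F) (feasb F).
Proof.
apply: (iffP andP) => [[/forallP h1 /forallP h2]|[h1 h2]]; split.
- by move=> k l hkl; move/forallP: (h1 k) => /(_ l); rewrite hkl.
- by move=> k; apply: h2.
- by apply/forallP => k; apply/forallP => l; apply/implyP; apply: h1.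
- by apply/forallP.
Qed.

Lemma main_sec : exists X : 'I_2 -> {set M},
    budget_feasible c B X /\ EFx c B v X /\
    rho_efficient2 c B v (Num.sqrt (2%:R^-1)) X.
Proof.
pose F0 : {ffun 'I_2 -> {set M}} := [ffun _ => set0].
have hF0 : feasb F0.
  apply/andP; split; apply/forallP => k.
    by apply/forallP => l; apply/implyP => _; rewrite !ffunE -setI_eq0 set0I.
  by rewrite ffunE /setval big_set0.
pose Fm := [arg max_(F > F0 | feasb F) NSWprod v F]%O.
have [hYf hYmax] : budget_feasible c B Fm /\
    forall Z, budget_feasible c B Z -> NSWprod v Z <= NSWprod v Fm.
  rewrite /Fm; case: arg_maxP => // F /feasbP hF hmax; split => // Z hZ.
  pose FZ : {ffun 'I_2 -> {set M}} := [ffun k => Z k].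
  have e : NSWprod v Z = NSWprod v FZ.
    by apply: eq_bigr => k _; rewrite ffunE.
  rewrite e; apply: hmax; apply/feasbP.
  case: hZ => h1 h2; split=> [k l|k]; rewrite ?ffunE; [exact: h1|exact: h2].
set Y := (fun k => Fm k) in hYf hYmax.
have [X [hXf [hXE hXN]]] : exists X, budget_feasible c B X /\ EFx c B v X /\
    NSWprod v Y <= 2%:R * NSWprod v X.
  have h01 : (ord0 : 'I_2) != ord_max by [].
  have h10 : (ord_max : 'I_2) != ord0 by [].
  case: (leP (fval ord0 (Y ord_max)) (setval (v ord0) (Y ord0))) => ha;
  case: (leP (fval ord_max (Y ord0)) (setval (v ord_max) (Y ord_max))) => hb.
  - exists Y; split => //; split.
      apply: noenvy_EFx => k l hkl.
      by case: (pair_cases _ _ _ _ h01 hkl) => [[-> ->]|[-> ->]].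
    have := NSW_ge0 Y; lra.
  - exact: (cut_alloc _ _ _ h10 hYf hb).
  - exact: (cut_alloc _ _ _ h01 hYf ha).
  - exact: (cut_alloc _ _ _ h01 hYf ha).
exists X; split => //; split => //; split => // Z hZ.
have hZY := hYmax Z hZ.
have hZ0 := NSW_ge0 Z.
rewrite /NSW2 -sqrtrM; last by rewrite invr_ge0.
apply: ler_wsqrtr.
have := NSW_ge0 X.
rewrite mulrC.
lra.
Qed.

End Proof.

Theorem mainTheorem4 (R : rcfType) (M : finType) (c : M -> R) (B : 'I_2 -> R)
    (v : 'I_2 -> M -> R) :
  (forall g, 0 <= c g) -> (forall i, 0 <= B i) -> (forall i g, 0 <= v i g) ->
  exists X : 'I_2 -> {set M},
    budget_feasible c B X /\ EFx c B v X /\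
    rho_efficient2 c B v (Num.sqrt (2%:R^-1)) X.
Proof.
move=> hc hB hv; exact: (@main_sec R M c B v hc hB hv).
Qed.
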